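(* There exists an asymptotically dense infinite discrete set $\Lambda\subset[0,+\infty)$ such that for any open set $G\subset\mathbb{R}$ one can select a function $f_G\in C_0^+(\mathbb{R})$ such that $D(f_G,\Lambda)=G$.
   Context: For a discrete set $\Lambda\subset[0,\infty)$ and measurable $f:\mathbb{R}\to[0,+\infty)$, put $s(x)=\sum_{\lambda\in\Lambda}f(x+\lambda)$ and $D(f,\Lambda)=\{x\in\mathbb{R}: s(x)=\infty\}$. An unbounded infinite discrete set $\Lambda=\{\lambda_1<\lambda_2<\cdots\}$ is asymptotically dense if $\lambda_n-\lambda_{n-1}\to0$, equivalently, for every $a>0$, $\#(\Lambda\cap[x,x+a])\to\infty$ as $x\to\infty$. $C_0^+(\mathbb{R})$ denotes the set of continuous functions $\mathbb{R}\to[0,+\infty)$ tending to $0$ at $+\infty$. *)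

(* Defs.v *)
From HB Require Import structures.
From mathcomp Require Import all_boot all_order all_algebra.
From mathcomp Require Import all_classical all_reals all_analysis.
Set Implicit Arguments. Unset Strict Implicit. Unset Printing Implicit Defensive.
Import Order.TTheory GRing.Theory Num.Theory.
Import numFieldNormedType.Exports.
Local Open Scope classical_set_scope.
Local Open Scope ring_scope.

(* An unbounded infinite discrete set Lambda = {lam_0 < lam_1 < ...} in [0,+oo)
   is encoded by its increasing enumeration lam : nat -> R
   (strictly increasing, lam 0 >= 0, lam n -> +oo). *)
Definition discrete_enum (R : realType) (lam : nat -> R) : Prop :=
  [/\ 0 <= lam 0%N,
      (forall n : nat, lam n < lam n.+1) &
      lam n @[n --> \oo] --> +oo].

Definition asymptotically_dense (R : realType) (lam : nat -> R) : Prop :=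
  discrete_enum lam /\ (lam n.+1 - lam n) @[n --> \oo] --> 0.

Definition C0plus (R : realType) (f : R -> R) : Prop :=
  [/\ continuous f, (forall x, 0 <= f x) & f x @[x --> +oo] --> 0].

Definition sfun (R : realType) (f : R -> R) (L : set R) (x : R) : \bar R :=
  (\esum_(l in L) (f (x + l))%:E)%E.

Definition Dset (R : realType) (f : R -> R) (L : set R) : set R :=
  [set x | sfun f L x = +oo%E].

(* Main.v *)
Require Import Defs.
From HB Require Import structures.
From mathcomp Require Import all_boot all_order all_algebra.
From mathcomp Require Import all_classical all_reals all_analysis.
From mathcomp Require Import zify ring lra.
Import Order.TTheory GRing.Theory Num.Theory.
Import numFieldNormedType.Exports.
Local Open Scope classical_set_scope.
Local Open Scope ring_scope.

Definition tt_ (k : nat) : nat := 2 ^ k.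
Definition AA (k : nat) : nat := 4 * tt_ k * tt_ k.
Definition MM (k : nat) : nat := 64 * tt_ k * tt_ k * tt_ k.
Definition PP (k : nat) : nat := AA k + MM k.
Definition NN (k : nat) : nat := \sum_(j < k) PP j.

Fixpoint dec (n : nat) : nat * nat :=
  if n is n'.+1 then
    let: (k, i) := dec n' in if (i.+1 < PP k)%N then (k, i.+1) else (k.+1, 0%N)
  else (0%N, 0%N).

Lemma tt_gt0 k : (0 < tt_ k)%N.
Proof. by rewrite /tt_ expn_gt0. Qed.

Lemma AA_gt0 k : (0 < AA k)%N.
Proof. by rewrite /AA !muln_gt0 tt_gt0. Qed.

Lemma MM_gt0 k : (0 < MM k)%N.
Proof. by rewrite /MM !muln_gt0 tt_gt0. Qed.

Lemma NNS k : NN k.+1 = (NN k + PP k)%N.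
Proof. by rewrite /NN big_ord_recr. Qed.

Lemma decN k i : (i < PP k)%N -> dec (NN k + i) = (k, i).
Proof.
elim: k i => [|k IHk] i.
  elim: i => [|i IHi] Hi; first by rewrite /NN big_ord0.
  rewrite addnS /= IHi ?(ltnW Hi) //= Hi //.
elim: i => [|i IHi] Hi.
  rewrite NNS addn0.
  have HP : (0 < PP k)%N by rewrite /PP addn_gt0 AA_gt0.
  rewrite -(prednK HP) addnS /= IHk; last by rewrite ltn_predL.
  by rewrite prednK // ltnn.
by rewrite addnS /= IHi ?(ltnW Hi) // Hi.
Qed.

Lemma dec_inv n : ((dec n).2 < PP (dec n).1)%N /\ n = (NN (dec n).1 + (dec n).2)%N.
Proof.
elim: n => [|n [IH1 IH2]] /=.
  by rewrite /NN big_ord0 /PP addn_gt0 AA_gt0.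
move: IH1 IH2; case: (dec n) => k i /= IH1 IH2.
case: ifP => H /=.
  by rewrite H IH2 addnS.
split; first by rewrite /PP addn_gt0 AA_gt0.
rewrite NNS addn0 IH2 -addnS; congr addn; apply/eqP.
by rewrite eqn_leq IH1 /= leqNgt H.
Qed.

Lemma NN_mono : {homo NN : i j / (i < j)%N >-> (i < j)%N}.
Proof.
apply: homo_ltn; first by move=> ? ? ?; apply: ltn_trans.
by move=> i; rewrite NNS -addn1 leq_add2l /PP addn_gt0 AA_gt0.
Qed.

Lemma dec1_ge K n : (NN K <= n)%N -> (K <= (dec n).1)%N.
Proof.
move=> HK; move: (dec_inv n); case: (dec n) => k i /= [H1 E].
rewrite leqNgt; apply/negP => Hlt.
have : (NN k.+1 <= NN K)%N.
  move: Hlt; rewrite leq_eqVlt => /orP [/eqP -> // | h].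
  apply: ltnW; exact: NN_mono.
rewrite NNS => h2.
have := leq_trans h2 HK; rewrite E leq_add2l leqNgt H1 //.
Qed.

Section Main.
Variable R : realType.

Definition trr (k : nat) : R := (tt_ k)%:R.
Definition BB (k : nat) : R := \sum_(j < k) (4 * trr j + (trr j)^-1).
Definition ss (k : nat) : R := BB k + 4 * trr k.
Definition CC (k : nat) : R := BB k + 2 * trr k.
Definition eta (k : nat) : R := (trr k)^-1 / (MM k)%:R.
Definition pt (k i : nat) : R :=
  if (i < AA k)%N then BB k + i%:R / trr k else ss k + (i - AA k)%:R * eta k.
Arguments pt : simpl never.
Definition lam (n : nat) : R := pt (dec n).1 (dec n).2.

Lemma trr_gt0 k : 0 < trr k.
Proof. by rewrite /trr ltr0n tt_gt0. Qed.

Lemma trr_ge k : (k.+1)%:R <= trr k.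
Proof. by rewrite /trr ler_nat /tt_ ltn_expl. Qed.

Lemma trr_ge1 k : 1 <= trr k.
Proof. by apply: le_trans (trr_ge k); rewrite ler1n. Qed.

Lemma trr_le k m : (k <= m)%N -> trr k <= trr m.
Proof. by move=> h; rewrite /trr ler_nat /tt_ leq_pexp2l. Qed.

Lemma AAE k : (AA k)%:R = 4 * trr k * trr k :> R.
Proof. by rewrite /AA !natrM. Qed.

Lemma MM_gt0R k : 0 < (MM k)%:R :> R.
Proof. by rewrite ltr0n MM_gt0. Qed.

Lemma eta_gt0 k : 0 < eta k.
Proof. by rewrite /eta divr_gt0 ?invr_gt0 ?trr_gt0 ?MM_gt0R. Qed.

Lemma eta_le k : eta k <= (trr k)^-1.
Proof.
rewrite /eta ler_pdivrMr ?MM_gt0R // ler_peMr ?invr_ge0 ?ltW ?trr_gt0 //.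
rewrite ltr1n /MM; have := tt_gt0 k; nia.
Qed.

Lemma BBS k : BB k.+1 = ss k + (trr k)^-1.
Proof. by rewrite /BB big_ord_recr /= /ss addrA. Qed.

Lemma BB_ge k : k%:R <= BB k.
Proof.
elim: k => [|k IH]; first by rewrite /BB big_ord0.
rewrite BBS /ss -addn1 natrD -addrA lerD //.
have t1 := trr_ge1 k; have t2 : 0 <= (trr k)^-1 by rewrite invr_ge0 ltW ?trr_gt0.
lra.
Qed.

Lemma pt_co k i : (i < AA k)%N -> pt k i = BB k + i%:R / trr k.
Proof. by rewrite /pt => ->. Qed.

Lemma pt_cl k i : (AA k <= i)%N -> pt k i = ss k + (i - AA k)%:R * eta k.
Proof. by rewrite /pt ltnNge => ->. Qed.

Lemma lam_step n : 0 < lam n.+1 - lam n <= (trr (dec n).1)^-1.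
Proof.
rewrite /lam /=.
move: (dec_inv n).1; case: (dec n) => k i /= Hi.
have t0 := trr_gt0 k.
have t0' : trr k != 0 by rewrite gt_eqF.
case: ifP => H /=.
  case: (ltngtP i.+1 (AA k)) => Hc.
  - rewrite pt_co // pt_co ?(ltnW Hc) //.
    have -> : BB k + i.+1%:R / trr k - (BB k + i%:R / trr k) = (trr k)^-1.
      by rewrite -natr1; field.
    by rewrite lexx andbT invr_gt0.
  - rewrite (pt_cl _ _ (ltnW Hc)) (pt_cl _ _ (Hc : (AA k <= i)%N)).
    rewrite subSn //.
    rewrite -natr1.
    have -> : ss k + ((i - AA k)%:R + 1) * eta k - (ss k + (i - AA k)%:R * eta k) = eta k.
      by ring.
    by rewrite eta_gt0 eta_le.
  - rewrite (pt_cl _ _ (eq_leq (esym Hc))) (pt_co _ _ (_ : (i < AA k)%N)); last by rewrite -Hc.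
    rewrite Hc subnn mul0r addr0 /ss.
    have -> : BB k + 4 * trr k - (BB k + i%:R / trr k) = (trr k)^-1.
      have : (i.+1)%:R = 4 * trr k * trr k by rewrite Hc AAE.
      rewrite -natr1 => Ei.
      have -> : i%:R = 4 * trr k * trr k - 1 by rewrite -Ei addrK.
      by field.
    by rewrite lexx andbT invr_gt0.
have Hi' : i.+1 = PP k by apply/eqP; rewrite eqn_leq Hi leqNgt H.
rewrite pt_co ?AA_gt0 // mul0r addr0 BBS.
have HA : (AA k <= i)%N.
  by rewrite -ltnS Hi' /PP -{1}(addn0 (AA k)) ltn_add2l MM_gt0.
rewrite pt_cl //.
have Ei : (i - AA k)%N = (MM k - 1)%N.
  by apply/eqP; rewrite -(eqn_add2r 1) !addn1 -subSn // Hi' /PP addKn subn1 prednK // MM_gt0.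
rewrite Ei natrB ?MM_gt0 //.
have M0 := MM_gt0R k.
have -> : ss k + (trr k)^-1 - (ss k + ((MM k)%:R - 1) * eta k) = eta k.
  by rewrite /eta; field; rewrite !gt_eqF.
by rewrite eta_gt0 eta_le.
Qed.

Lemma lam_incr n : lam n < lam n.+1.
Proof. by have /andP[h _] := lam_step n; rewrite -subr_gt0. Qed.

Lemma lam_le m n : (m <= n)%N -> lam m <= lam n.
Proof.
move=> h; rewrite -(subnKC h); elim: (n - m)%N => [|d IH]; first by rewrite addn0.
by rewrite addnS; apply: le_trans IH (ltW (lam_incr _)).
Qed.

Lemma lamN k i : (i < PP k)%N -> lam (NN k + i) = pt k i.
Proof. by move=> h; rewrite /lam decN. Qed.

Lemma lam_dense : asymptotically_dense lam.
Proof.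
split; first split.
- by rewrite /lam /= pt_co ?AA_gt0 // mul0r addr0 /BB big_ord0.
- exact: lam_incr.
- apply/cvgryPge => A.
  exists (NN (Num.truncn A).+1) => // n /= Hn.
  apply: le_trans _ (lam_le _ _ Hn).
  rewrite -[NN _]addn0 lamN ?/PP ?addn_gt0 ?AA_gt0 // pt_co ?AA_gt0 // mul0r addr0.
  apply: le_trans (BB_ge _); apply: ltW; exact: truncnS_gt.
- apply/cvgr0Pnorm_le => e e0.
  exists (NN (Num.truncn e^-1)) => // n /= Hn.
  have /andP[h1 h2] := lam_step n.
  rewrite ger0_norm; last exact: ltW h1.
  apply: le_trans h2 _.
  rewrite -[e]invrK lef_pV2 ?posrE ?trr_gt0 ?invr_gt0 //.
  apply: le_trans (trr_le _ _ (dec1_ge _ _ Hn)).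
  apply: le_trans (trr_ge _).
  by apply: ltW; exact: truncnS_gt.
Qed.

Section Phi.
Variable G : set R.

Definition phiS (z : R) : set R := [set 1] `|` [set `|z - a| | a in ~` G].
Definition phi (z : R) : R := inf (phiS z).

Lemma phiS_lb z : lbound (phiS z) 0.
Proof. by move=> _ [->|[a _ <-]] //. Qed.

Lemma phiS_n0 z : phiS z !=set0.
Proof. by exists 1; left. Qed.

Lemma phiS_hlb z : has_lbound (phiS z).
Proof. by exists 0; apply: phiS_lb. Qed.

Lemma phi_ge0 z : 0 <= phi z.
Proof. exact: lb_le_inf (phiS_n0 z) (phiS_lb z). Qed.

Lemma phi_le1 z : phi z <= 1.
Proof. by apply: ge_inf; [exact: phiS_hlb | left]. Qed.

Lemma phi_out z : ~ G z -> phi z = 0.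
Proof.
move=> nG; apply/eqP; rewrite eq_le phi_ge0 andbT.
by apply: ge_inf; [exact: phiS_hlb | right; exists z => //; rewrite subrr normr0].
Qed.

Lemma phi_lip z w : phi z <= phi w + `|z - w|.
Proof.
rewrite -lerBlDr; apply: lb_le_inf; first exact: phiS_n0.
move=> _ [->|[a Ga <-]].
  rewrite lerBlDr; apply: le_trans (phi_le1 z) _; by rewrite lerDl.
rewrite lerBlDr; apply: le_trans (_ : `|z - a| <= _).
  by apply: ge_inf; [exact: phiS_hlb | right; exists a].
have -> : z - a = (z - w) + (w - a) by ring.
by rewrite addrC ler_normD.
Qed.

Lemma phi_lip2 z w : `|phi z - phi w| <= `|z - w|.
Proof.
rewrite ler_norml; apply/andP; split.
  have := phi_lip w z; rewrite distrC; lra.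
have := phi_lip z w; lra.
Qed.

Lemma phi_cont : continuous phi.
Proof.
move=> z; apply/cvgrPdist_le => e e0.
near=> w.
apply: le_trans (phi_lip2 z w) _.
near: w.
move: e e0; apply/cvgrPdist_le; exact: cvg_id.
Unshelve. all: by end_near.
Qed.

Lemma phi_pos z : open G -> G z -> 0 < phi z.
Proof.
move=> oG Gz.
have : nbhs z G by apply: open_nbhs_nbhs; split.
case/nbhs_ballP => r r0 sub.
apply: (@lt_le_trans _ _ (Num.min 1 r)); first by rewrite lt_min ltr01 r0.
apply: lb_le_inf; first exact: phiS_n0.
move=> _ [->|[a Ga <-]]; first by rewrite ge_min lexx.
rewrite ge_min; apply/orP; right.
rewrite leNgt; apply/negP => h; apply: Ga; apply: sub.
by rewrite -ball_normE /=.
Qed.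
Definition hh (k : nat) : R := ((MM k)%:R)^-1.
Definition gg (k : nat) (y : R) : R :=
  hh k * Num.min (phi (y - ss k)) (Num.max 0 (trr k - `|y - ss k|)).
Definition ff (y : R) : R := \sum_(k < (Num.truncn y).+1) gg k y.

Lemma hh_gt0 k : 0 < hh k.
Proof. by rewrite /hh invr_gt0 MM_gt0R. Qed.

Lemma hh_le k m : (k <= m)%N -> hh m <= hh k.
Proof.
move=> h; rewrite /hh lef_pV2 ?posrE ?MM_gt0R // ler_nat /MM.
have := trr_le k m h; rewrite /trr ler_nat => h2.
by rewrite !leq_mul.
Qed.

Lemma hh_small k : hh k <= (k.+1%:R)^-1.
Proof.
rewrite /hh lef_pV2 ?posrE ?MM_gt0R ?ltr0n //.
apply: le_trans (trr_ge k) _; rewrite /trr ler_nat /MM.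
have := tt_gt0 k; nia.
Qed.

Lemma trrS k : trr k.+1 = 2 * trr k.
Proof. by rewrite /trr /tt_ expnS natrM. Qed.

Lemma CC_lt k : CC k < ss k - trr k.
Proof. rewrite /CC /ss; have := trr_gt0 k; lra. Qed.

Lemma CCS_gt k : ss k + trr k < CC k.+1.
Proof.
rewrite /CC BBS trrS; have := trr_gt0 k.
have : 0 < (trr k)^-1 by rewrite invr_gt0 trr_gt0.
lra.
Qed.

Lemma CC_incr k : CC k < CC k.+1.
Proof. have := CC_lt k; have := CCS_gt k; have := trr_gt0 k; lra. Qed.

Lemma CC_le k m : (k <= m)%N -> CC k <= CC m.
Proof.
move=> h; rewrite -(subnKC h); elim: (m - k)%N => [|d IH]; first by rewrite addn0.
by rewrite addnS; apply: le_trans IH (ltW (CC_incr _)).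
Qed.

Lemma CC_ge k : k%:R <= CC k.
Proof.
rewrite /CC; have := BB_ge k; have := trr_gt0 k; lra.
Qed.

Lemma CC0 : CC 0 = 2.
Proof. by rewrite /CC /BB big_ord0 /trr /tt_ expn0 add0r mulr1. Qed.

Lemma gg_ge0 k y : 0 <= gg k y.
Proof.
rewrite /gg mulr_ge0 ?(ltW (hh_gt0 k)) //.
by rewrite le_min phi_ge0 le_max lexx.
Qed.

Lemma gg_le k y : gg k y <= hh k.
Proof.
rewrite /gg -[X in _ <= X]mulr1 ler_pM2l ?hh_gt0 //.
by rewrite ge_min phi_le1.
Qed.

Lemma gg_le_phi k y : gg k y <= hh k * phi (y - ss k).
Proof. by rewrite /gg ler_pM2l ?hh_gt0 // ge_min lexx. Qed.

Lemma gg_out k y : y <= CC k \/ CC k.+1 <= y -> gg k y = 0.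
Proof.
move=> H.
have Hn : trr k <= `|y - ss k|.
  have h1 := CC_lt k; have h2 := CCS_gt k; have h3 := trr_gt0 k.
  case: H => H.
    rewrite ler0_norm; first by lra.
    by lra.
  rewrite ger0_norm; first by lra.
  by lra.
rewrite /gg.
have -> : Num.max 0 (trr k - `|y - ss k|) = 0.
  by apply/max_idPl; lra.
have -> : Num.min (phi (y - ss k)) 0 = 0 by apply/min_idPr; exact: phi_ge0.
by rewrite mulr0.
Qed.

Lemma sum_trunc (F : nat -> R) a b : (forall k, (a <= k)%N -> F k = 0) ->
  (a <= b)%N -> \sum_(k < b) F k = \sum_(k < a) F k.
Proof.
move=> F0 ab; rewrite -(subnKC ab); elim: (b - a)%N => [|d IH]; first by rewrite addn0.
by rewrite addnS big_ord_recr /= IH F0 ?addr0 // leq_addr.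
Qed.

Lemma ff_all m y : y < CC m -> ff y = \sum_(k < m) gg k y.
Proof.
move=> ym.
have F1 : forall k, ((Num.truncn y).+1 <= k)%N -> gg k y = 0.
  move=> k hk; apply: gg_out; left; apply: ltW; apply: (lt_le_trans _ (CC_ge k)).
  apply: lt_le_trans (truncnS_gt y) _; by rewrite ler_nat.
have F2 : forall k, (m <= k)%N -> gg k y = 0.
  move=> k hk; apply: gg_out; left; apply: ltW; apply: lt_le_trans ym (CC_le _ _ hk).
rewrite /ff; case: (leqP m (Num.truncn y).+1) => h.
  by rewrite (sum_trunc _ _ _ F2 h).
by rewrite (sum_trunc _ _ _ F1 (ltnW h)).
Qed.

Lemma ff_eq j y : CC j <= y < CC j.+1 -> ff y = gg j y.
Proof.
case/andP => h1 h2; rewrite (ff_all _ _ h2) big_ord_recr /= big1 ?add0r //.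
move=> [k /= hk] _; apply: gg_out; right; apply: le_trans h1; exact: CC_le.
Qed.

Lemma find_blk y : CC 0 <= y -> exists j, CC j <= y < CC j.+1.
Proof.
move=> y0.
suff : forall n, y < CC n -> exists j, CC j <= y < CC j.+1.
  apply; apply: (lt_le_trans _ (CC_ge (Num.truncn y).+1)); exact: truncnS_gt.
elim=> [|n IH] h; first by move: h; rewrite ltNge y0.
case: (ltP y (CC n)) => h'; first exact: IH.
by exists n; rewrite h' h.
Qed.

Lemma ff_ge0 y : 0 <= ff y.
Proof. by rewrite /ff sumr_ge0 // => k _; exact: gg_ge0. Qed.

Lemma ff_le m y : CC m <= y -> ff y <= hh m.
Proof.
move=> hm.
have [j /andP[h1 h2]] := find_blk _ (le_trans (CC_le _ _ (leq0n m)) hm).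
rewrite (ff_eq j); last by rewrite h1 h2.
apply: le_trans (gg_le j y) _; apply: hh_le.
rewrite leqNgt; apply/negP => hj.
have := le_lt_trans hm h2; rewrite ltNge CC_le //.
Qed.

Lemma gg_cont k : continuous (gg k).
Proof.
move=> y.
apply: cvgM; first exact: cvg_cst.
have c1 : continuous (fun y => y - ss k).
  by move=> z; apply: cvgB; [exact: cvg_id | exact: cvg_cst].
apply: (@min_fun_continuous _ _ _ (fun y => phi (y - ss k)) (fun y => Num.max 0 (trr k - `|y - ss k|))).
  by move=> z; exact: (continuous_comp (c1 z) (phi_cont _)).
move=> z; apply: (@continuous_max _ _ (fun y => 0) (fun y => (trr k - `|y - ss k|))).
  exact: cvg_cst.
apply: cvgB; first exact: cvg_cst.
apply: cvg_norm; exact: c1.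
Qed.

Lemma sum_cont m : continuous (fun y => \sum_(k < m) gg k y).
Proof.
elim: m => [|m IH].
  have -> : (fun y => \sum_(k < 0) gg k y) = fun _ => 0.
    by apply: funext => y; rewrite big_ord0.
  move=> y; exact: cvg_cst.
have -> : (fun y => \sum_(k < m.+1) gg k y) = fun y => \sum_(k < m) gg k y + gg m y.
  by apply: funext => y; rewrite big_ord_recr.
move=> y; apply: cvgD; [exact: IH | exact: gg_cont].
Qed.

Lemma ff_cont : continuous ff.
Proof.
move=> y.
have hm : y < CC (Num.truncn y).+1.
  apply: (lt_le_trans _ (CC_ge _)); exact: truncnS_gt.
have E : {near y, (fun z => \sum_(k < (Num.truncn y).+1) gg k z) =1 ff}.
  near=> z; rewrite (ff_all (Num.truncn y).+1) //.
  near: z; exact: lt_nbhsl.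
apply: cvg_trans (near_eq_cvg E) _.
have -> : ff y = \sum_(k < (Num.truncn y).+1) gg k y by exact: ff_all.
exact: sum_cont.
Unshelve. all: by end_near.
Qed.

Lemma ff_cvg0 : ff x @[x --> +oo] --> 0.
Proof.
apply/cvgr0Pnorm_le => e e0.
set m := Num.truncn e^-1.
near=> y.
rewrite ger0_norm ?ff_ge0 //.
apply: le_trans (ff_le m _ _) _.
  near: y; apply: nbhs_pinfty_ge; exact: num_real.
apply: le_trans (hh_small m) _.
rewrite -[e]invrK lef_pV2 ?posrE ?invr_gt0 ?ltr0n //.
apply: ltW; exact: truncnS_gt.
Unshelve. all: by end_near.
Qed.

Lemma ff_C0 : C0plus ff.
Proof. split; [exact: ff_cont | exact: ff_ge0 | exact: ff_cvg0]. Qed.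

Lemma series_le (u : nat -> R) C : (forall n, 0 <= u n) ->
  (forall N, \sum_(i < N) u i <= C) -> (\sum_(n <oo) (u n)%:E <= C%:E)%E.
Proof.
move=> u0 hb; apply: lime_le.
  by apply: is_cvg_nneseries => n _ _; rewrite lee_fin.
by apply: nearW => N; rewrite sumEFin lee_fin big_mkord; exact: hb.
Qed.

Lemma series_ge (u : nat -> R) N : (forall n, 0 <= u n) ->
  ((\sum_(i < N) u i)%:E <= \sum_(n <oo) (u n)%:E)%E.
Proof.
move=> u0; rewrite -sumEFin -(big_mkord xpredT (fun i => (u i)%:E)).
by apply: nneseries_lim_ge => n _ _; rewrite lee_fin.
Qed.

Lemma psum_blocks (u : nat -> R) J :
  \sum_(n < NN J) u n = \sum_(j < J) \sum_(i < PP j) u (NN j + i)%N.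
Proof.
elim: J => [|J IH]; first by rewrite /NN !big_ord0.
rewrite big_ord_recr /= -IH.
rewrite (_ : \sum_(n < NN J.+1) u n = \sum_(n < NN J + PP J) u n); last by rewrite NNS.
by rewrite big_split_ord.
Qed.

Lemma blk_split (u : nat -> R) j :
  \sum_(i < PP j) u (NN j + i)%N =
  \sum_(i < AA j) u (NN j + i)%N + \sum_(i < MM j) u (NN j + (AA j + i))%N.
Proof. by rewrite /PP big_split_ord. Qed.

Lemma trr_inv_sum J : \sum_(j < J) (trr j)^-1 <= 2.
Proof.
suff : \sum_(j < J) (trr j)^-1 + 2 * (trr J)^-1 = 2.
  move=> <-; rewrite lerDl mulr_ge0 // invr_ge0; exact: ltW (trr_gt0 _).
elim: J => [|J IH]; first by rewrite big_ord0 add0r /trr /tt_ expn0 invr1 mulr1.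
rewrite big_ord_recr /= trrS -{3}IH.
have t0 := trr_gt0 J; have t0' : trr J != 0 by rewrite gt_eqF.
by field.
Qed.

Lemma region_cl x j e : `|x| <= 2 * trr j -> 0 <= e < (trr j)^-1 ->
  ff (x + ss j + e) = gg j (x + ss j + e).
Proof.
move=> hx /andP[e0 e1]; apply: ff_eq.
have h1 := CC_lt j.
have h2 : CC j.+1 = ss j + (trr j)^-1 + 4 * trr j.
  by rewrite /CC BBS trrS; ring.
rewrite h2; move: h1; rewrite /CC; move: hx; rewrite ler_norml => /andP[hx1 hx2].
have t0 := trr_gt0 j.
move=> h1; apply/andP; split.
  rewrite /ss; lra.
lra.
Qed.

Lemma region_co x j i : `|x| <= 2 * trr j -> (i < AA j.+1)%N ->
  ff (x + pt j.+1 i) <= hh j.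
Proof.
move=> hx hi; apply: ff_le; rewrite pt_co // BBS /CC.
move: hx; rewrite ler_norml => /andP[hx1 hx2].
have t0 := trr_gt0 j.
have : 0 <= (trr j)^-1 by rewrite invr_ge0 ltW.
have : 0 <= i%:R / trr j.+1 by rewrite divr_ge0 // ltW // trr_gt0.
rewrite /ss; lra.
Qed.

Lemma etaM j : (MM j)%:R * eta j = (trr j)^-1.
Proof.
rewrite /eta; have := MM_gt0R j; have := trr_gt0 j => h1 h2.
by field; rewrite !gt_eqF.
Qed.

Lemma hhM j : (MM j)%:R * hh j = 1.
Proof. by rewrite /hh mulfV // gt_eqF // MM_gt0R. Qed.

Lemma e_range j (i : 'I_(MM j)) : 0 <= i%:R * eta j < (trr j)^-1.
Proof.
rewrite mulr_ge0 ?ler0n ?(ltW (eta_gt0 j)) //= -etaM ltr_pM2r ?eta_gt0 //.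
by rewrite ltr_nat.
Qed.

Lemma cluster_sum (u : R -> R) j :
  \sum_(i < MM j) u (pt j (AA j + i)%N) = \sum_(i < MM j) u (ss j + i%:R * eta j).
Proof.
by apply: eq_bigr => i _; rewrite pt_cl ?leq_addr // addKn.
Qed.

Lemma lam_lt m n : (m < n)%N -> lam m < lam n.
Proof.
move=> h; exact: lt_le_trans (lam_incr m) (lam_le _ _ h).
Qed.

Lemma lam_inj : injective lam.
Proof.
move=> m n E; case: (ltngtP m n) => // h.
  by have := lam_lt _ _ h; rewrite E ltxx.
by have := lam_lt _ _ h; rewrite E ltxx.
Qed.

Lemma sfun_series x :
  Defs.sfun ff (range lam) x = (\sum_(n <oo) (ff (x + lam n))%:E)%E.
Proof.
rewrite /Defs.sfun esum_image; last by move=> m n _ _; exact: lam_inj.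
rewrite nneseries_esumT // => n; rewrite lee_fin; exact: ff_ge0.
Qed.

Lemma psum_block_eq x J :
  \sum_(n < NN J) ff (x + lam n) =
  \sum_(j < J) (\sum_(i < AA j) ff (x + pt j i) +
                \sum_(i < MM j) ff (x + (ss j + i%:R * eta j))).
Proof.
rewrite (psum_blocks (fun n => ff (x + lam n))); apply: eq_bigr => j _.
rewrite (blk_split (fun n => ff (x + lam n))); congr (_ + _).
  apply: eq_bigr => i _; rewrite lamN //.
  by apply: leq_trans (ltn_ord i) _; rewrite /PP leq_addr.
rewrite -(cluster_sum (fun y => ff (x + y))).
apply: eq_bigr => i _; rewrite lamN //.
by rewrite /PP ltn_add2l.
Qed.

Lemma NN_ge k : (k <= NN k)%N.
Proof.
elim: k => [|k IH] //; rewrite NNS -addn1 leq_add //.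
by rewrite /PP addn_gt0 AA_gt0.
Qed.

Lemma sum_mono (u : nat -> R) N M : (forall n, 0 <= u n) -> (N <= M)%N ->
  \sum_(n < N) u n <= \sum_(n < M) u n.
Proof.
move=> u0 h; rewrite -(subnKC h) big_split_ord /= lerDl.
by apply: sumr_ge0 => i _.
Qed.

Lemma tail_bound (b : nat -> R) j0 N : (forall j, 0 <= b j) ->
  (forall j, (j0 <= j)%N -> b j.+1 <= (trr j)^-1) ->
  \sum_(j < (j0 + N).+1) b j <= b 0%N + \sum_(j < j0) b j.+1 + 2.
Proof.
move=> b0 hb; rewrite big_ord_recl -addrA lerD2l.
rewrite (_ : \sum_(i < j0 + N) b (lift ord0 i) = \sum_(i < j0 + N) b i.+1); last first.
  by apply: eq_bigr => i _; rewrite lift0.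
rewrite big_split_ord /= lerD2l.
apply: le_trans (trr_inv_sum N).
apply: ler_sum => i _; apply: le_trans (hb _ (leq_addr _ _)) _.
rewrite lef_pV2 ?posrE ?trr_gt0 //; apply: trr_le; exact: leq_addl.
Qed.

Lemma up_bound x : ~ G x -> (Defs.sfun ff (range lam) x < +oo)%E.
Proof.
move=> nGx; have px := phi_out _ nGx.
set j0 := Num.truncn `|x|.
have hx : forall j, (j0 <= j)%N -> `|x| <= 2 * trr j.
  move=> j hj; have := truncnS_gt `|x|; rewrite -/j0 => h1.
  have h2 : (j0.+1)%:R <= trr j by apply: le_trans (trr_ge j); rewrite ler_nat.
  have := trr_gt0 j; lra.
set b := fun j => \sum_(i < AA j) ff (x + pt j i) +
                \sum_(i < MM j) ff (x + (ss j + i%:R * eta j)).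
have b0 : forall j, 0 <= b j.
  by move=> j; rewrite addr_ge0 // sumr_ge0 // => i _; exact: ff_ge0.
have hb : forall j, (j0 <= j)%N -> b j.+1 <= (trr j)^-1.
  move=> j hj; rewrite /b.
  have t0 := trr_gt0 j; have t0' : trr j != 0 by rewrite gt_eqF.
  have e1 : \sum_(i < AA j.+1) ff (x + pt j.+1 i) <= (trr j)^-1 / 2.
    apply: le_trans (_ : \sum_(i < AA j.+1) hh j <= _).
      by apply: ler_sum => i _; apply: region_co => //; exact: hx.
    rewrite sumr_const card_ord -[hh j *+ _]mulr_natr AAE trrS /hh /MM !natrM -/(trr j).
    have -> : (64%:R : R) = 64 by [].
    have -> : (64 * trr j * trr j * trr j)^-1 * (4 * (2 * trr j) * (2 * trr j)) = (trr j)^-1 / 4.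
      by field.
    rewrite ler_pM2l ?invr_gt0 //; lra.
  have e2 : \sum_(i < MM j.+1) ff (x + (ss j.+1 + i%:R * eta j.+1)) <= (trr j)^-1 / 2.
    have hx1 := hx _ (leq_trans hj (leqnSn j)).
    apply: le_trans (_ : \sum_(i < MM j.+1) (hh j.+1 * (trr j.+1)^-1) <= _).
      apply: ler_sum => i _.
      have er := e_range _ i; move: (er) => /andP[er1 er2].
      rewrite addrA region_cl //.
      apply: le_trans (gg_le_phi _ _) _; rewrite ler_pM2l ?hh_gt0 //.
      rewrite (_ : x + ss j.+1 + i%:R * eta j.+1 - ss j.+1 = x + i%:R * eta j.+1); last by ring.
      apply: le_trans (phi_lip _ x) _; rewrite px add0r.
      rewrite (_ : x + i%:R * eta j.+1 - x = i%:R * eta j.+1); last by ring.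
      by rewrite ger0_norm // ltW.
    rewrite sumr_const card_ord -[_ *+ MM j.+1]mulr_natr.
    by rewrite mulrAC [hh _ * _]mulrC hhM mul1r trrS invfM mulrC.
  lra.
rewrite sfun_series.
apply: (@le_lt_trans _ _ (b 0%N + \sum_(j < j0) b j.+1 + 2)%:E); last exact: ltry.
apply: series_le; first by move=> n; exact: ff_ge0.
move=> N.
apply: le_trans (sum_mono (fun n => ff (x + lam n)) N (NN (j0 + N).+1) _ _) _.
- by move=> n; exact: ff_ge0.
- by apply: leq_trans (NN_ge _); apply: leq_trans (leq_addl j0 N) _.
rewrite psum_block_eq.
exact: (tail_bound b j0 N b0 hb).
Qed.

Lemma low_bound x : open G -> G x -> Defs.sfun ff (range lam) x = +oo%E.
Proof.
move=> oG Gx; have p0 := phi_pos x oG Gx; set p := phi x in p0.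
have p1 : p <= 1 by exact: phi_le1.
set j1 := Num.truncn (`|x| + 2 + 2 / p).
have hj : forall j, (j1 <= j)%N -> `|x| + 2 + 2 / p < trr j.
  move=> j hj; have := truncnS_gt (`|x| + 2 + 2 / p); rewrite -/j1 => h1.
  have h2 : (j1.+1)%:R <= trr j by apply: le_trans (trr_ge j); rewrite ler_nat.
  lra.
have hc : forall j, (j1 <= j)%N ->
    p / 2 <= \sum_(i < MM j) ff (x + (ss j + i%:R * eta j)).
  move=> j hj'; have h := hj j hj'.
  have t0 := trr_gt0 j.
  have q0 : 0 < 2 / p by rewrite divr_gt0.
  have tinv : (trr j)^-1 <= p / 2.
    rewrite -[p / 2]invf_div lef_pV2 ?posrE //.
    have := normr_ge0 x; lra.
  have tinv1 : (trr j)^-1 <= 1 by rewrite invr_le1 // ?trr_ge1 ?unitfE ?gt_eqF.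
  apply: le_trans (_ : \sum_(i < MM j) (hh j * (p / 2)) <= _).
    rewrite sumr_const card_ord -[_ *+ MM j]mulr_natr.
    by rewrite mulrAC [hh _ * _]mulrC hhM mul1r.
  apply: ler_sum => i _.
  have := e_range _ i; set e := i%:R * eta j => /andP[er1 er2].
  rewrite addrA region_cl //; last first.
    by rewrite er1 er2.
    have := normr_ge0 x; lra.
  rewrite /gg ler_pM2l ?hh_gt0 //.
  rewrite (_ : x + ss j + e - ss j = x + e); last by ring.
  rewrite le_min; apply/andP; split.
    have := phi_lip x (x + e).
    rewrite (_ : x - (x + e) = - e); last by ring.
    rewrite normrN ger0_norm // -/p.
    lra.
  rewrite le_max; apply/orP; right.
  have : `|x + e| <= `|x| + e.
    by apply: le_trans (ler_normD _ _) _; rewrite (ger0_norm er1).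
  lra.
have hN : forall N, ((N%:R * (p / 2))%:E <= Defs.sfun ff (range lam) x)%E.
  move=> N; rewrite sfun_series.
  apply: le_trans (series_ge (fun n => ff (x + lam n)) (NN (j1 + N)) _).
    rewrite lee_fin psum_block_eq big_split_ord /=.
    rewrite -[X in X <= _]add0r; apply: lerD.
      by apply: sumr_ge0 => j _; rewrite addr_ge0 // sumr_ge0 // => i _; exact: ff_ge0.
    apply: le_trans (_ : \sum_(i < N) (p / 2) <= _).
      by rewrite sumr_const card_ord mulr_natl.
    apply: ler_sum => i _.
    apply: le_trans (hc (j1 + i)%N (leq_addr _ _)) _.
    rewrite -[X in X <= _]add0r; apply: lerD; last exact: lexx.
    by apply: sumr_ge0 => k _; exact: ff_ge0.
  by move=> n; exact: ff_ge0.
apply: eq_infty => r.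
set N := (Num.truncn (2 * r / p)).+1.
apply: le_trans (hN N).
rewrite lee_fin.
have := truncnS_gt (2 * r / p); rewrite -/N ltr_pdivrMr // => h.
lra.
Qed.

Lemma Dset_eq : open G -> Dset ff (range lam) = G.
Proof.
move=> oG; apply/seteqP; split => x /=.
  rewrite /Dset /= => hx.
  apply: contrapT => nGx.
  by have := up_bound x nGx; rewrite hx ltxx.
by move=> Gx; rewrite /Dset /=; exact: low_bound.
Qed.

End Phi.

End Main.

Theorem theorem3p1 (R : realType) :
  exists lam : nat -> R, asymptotically_dense lam /\
    forall G : set R, open G ->
      exists f : R -> R, C0plus f /\ Dset f (range lam) = G.
Proof.
exists (lam R); split; first exact: lam_dense.
move=> G oG; exists (ff R G); split; [exact: ff_C0 | exact: Dset_eq].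
Qed.
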